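(* Let $(\sigma_n)_{n\ge1}$ be complex numbers with $\liminf_{n\to\infty}(\operatorname{Re}\sigma_{n+1}-\operatorname{Re}\sigma_n)=\gamma>0$. Then for every $\varepsilon\in(0,1)$ and every $T>\frac{2\pi}{\gamma\sqrt{1-\varepsilon}}$ there exists $n_0=n_0(\varepsilon)\in\mathbb{N}$ (independent of $T$) such that for every $n\ge n_0$ $$\sum_{m\ge n_0,\ m\ne n}|K(\sigma_n-\overline{\sigma_m})|+\sum_{m\ge n_0}|K(\sigma_n+\sigma_m)|\le\frac{4\pi}{T\gamma^2(1-\varepsilon)}\Big(1+\sum_{m=n_0}^\infty\frac{1}{4m^2-1}\Big).$$
   Context: For $T>0$ and $w\in\mathbb{C}$ with $T^2w^2\neq\pi^2$, $K(w):=\dfrac{T\pi}{\pi^2-T^2w^2}$. *)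

(* Defs.v *)
From Stdlib Require Import Reals Lra.
Open Scope R_scope.

Record Cplx := mkC { Re : R; Im : R }.

Definition Cadd (z w : Cplx) : Cplx := mkC (Re z + Re w) (Im z + Im w).
Definition Csub (z w : Cplx) : Cplx := mkC (Re z - Re w) (Im z - Im w).
Definition Cmul (z w : Cplx) : Cplx :=
  mkC (Re z * Re w - Im z * Im w) (Re z * Im w + Im z * Re w).
Definition Cconj (z : Cplx) : Cplx := mkC (Re z) (- Im z).
Definition RtoC (x : R) : Cplx := mkC x 0.
Definition Cinv (z : Cplx) : Cplx :=
  mkC (Re z / (Re z ^ 2 + Im z ^ 2)) (- Im z / (Re z ^ 2 + Im z ^ 2)).
Definition Cdiv (z w : Cplx) : Cplx := Cmul z (Cinv w).
Definition Cmod (z : Cplx) : R := sqrt (Re z ^ 2 + Im z ^ 2).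

Definition K (T : R) (w : Cplx) : Cplx :=
  Cdiv (RtoC (T * PI))
       (Csub (RtoC (PI ^ 2)) (Cmul (RtoC (T ^ 2)) (Cmul w w))).

Definition is_liminf (u : nat -> R) (g : R) : Prop :=
  (forall e, 0 < e -> exists N, forall n, (N <= n)%nat -> g - e <= u n) /\
  (forall e, 0 < e -> forall N, exists n, (N <= n)%nat /\ u n <= g + e).

(* Main.v *)
Require Import Defs.
From Stdlib Require Import Reals Arith Lra Lia Psatz ZArith.
Open Scope R_scope.

Lemma nat_unb (x : R) : exists n : nat, x < INR n.
Proof.
  destruct (archimed (Rabs x)) as [H1 _].
  assert (Hz : (0 <= up (Rabs x))%Z).
  { apply le_IZR. pose proof (Rabs_pos x). lra. }
  exists (Z.to_nat (up (Rabs x))).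
  rewrite INR_IZR_INZ, Z2Nat.id by exact Hz.
  pose proof (Rle_abs x). lra.
Qed.

Lemma cmod_K (T : R) (w : Cplx) :
  let a := Re w in let b := Im w in
  let Q := (PI^2 - (T^2*(a*a - b*b) - 0*(a*b+b*a)))^2 + (0 - (T^2*(a*b+b*a) + 0*(a*a-b*b)))^2 in
  Q <> 0 -> Cmod (K T w) = sqrt ((T*PI)^2 / Q).
Proof.
  intros a b Q HQ. unfold K, Cdiv, Cmul, Cinv, Csub, RtoC, Cmod; simpl.
  f_equal. fold a b. unfold Q in *. field. intro H0; apply HQ; etransitivity; [|exact H0]; ring.
Qed.

Lemma KB (T c x : R) (w : Cplx) : 0 < T -> 0 < c -> 2*PI < T*c -> 1 <= x ->
  c*x <= Rabs (Re w) -> Cmod (K T w) <= 4*PI/(T*c^2) * /(4*x^2-1).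
Proof.
  intros HT Hc HTc Hx Hw.
  pose proof PI_RGT_0 as Hpi.
  set (a := Re w) in *. set (b := Im w).
  set (A0 := T^2*c^2*(4*x^2-1)/4).
  assert (HA0 : 0 < A0).
  { unfold A0. apply Rmult_lt_0_compat; [|lra].
    apply Rmult_lt_0_compat; [apply Rmult_lt_0_compat; apply pow_lt; lra|nra]. }
  assert (Ha2 : c^2*x^2 <= a^2).
  { assert (0 <= c*x) by nra.
    replace (a^2) with (Rabs a * Rabs a) by (rewrite <- Rabs_mult; rewrite Rabs_right; [ring| nra]).
    nra. }
  assert (HA : A0 <= T^2*a^2 - PI^2).
  { unfold A0. assert (PI^2 <= T^2*c^2/4) by nra. nra. }
  set (Q := (PI^2 - (T^2*(a*a - b*b) - 0*(a*b+b*a)))^2 + (0 - (T^2*(a*b+b*a) + 0*(a*a-b*b)))^2).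
  assert (HQ : (T^2*a^2 - PI^2)^2 <= Q).
  { assert (Q - (T^2*a^2 - PI^2)^2 = (T^2*b^2)^2 + 2*(T^2*b^2)*(T^2*a^2+PI^2)) by (unfold Q; ring).
    assert (0 <= T^2*b^2) by (apply Rmult_le_pos; apply pow2_ge_0).
    assert (0 <= T^2*a^2+PI^2) by (pose proof (pow2_ge_0 (T*a)); nra).
    nra. }
  assert (HA02 : A0^2 <= Q) by nra.
  assert (HQp : 0 < Q) by nra.
  rewrite (cmod_K T w) by (fold a b; fold Q; lra). fold a b. fold Q.
  assert (HX : 4*PI/(T*c^2) * /(4*x^2-1) = T*PI/A0).
  { unfold A0. field. repeat split; nra. }
  rewrite HX.
  rewrite <- (sqrt_square (T*PI/A0)) by (apply Rlt_le; apply Rdiv_lt_0_compat; nra).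
  apply sqrt_le_1_alt.
  replace (T*PI/A0*(T*PI/A0)) with ((T*PI)^2 * / (A0^2)) by (field; lra).
  unfold Rdiv. apply Rmult_le_compat_l; [apply pow2_ge_0|].
  apply Rinv_le_contravar; [nra|exact HA02].
Qed.

Definition t1 (n m : nat) : R :=
  if lt_dec m n then /(4*INR(n-m)^2-1)
  else if Nat.eq_dec m n then 0 else /(4*INR(m-n)^2-1).
Definition Bf (n m : nat) : R :=
  if lt_dec m n then /(2*(2*INR(n-m)-1)) else 1 - /(2*(2*INR(m-n)+1)).

Lemma r1 z : 1 <= z -> /(4*z^2-1) <= /(2*(2*z-1)).
Proof. intro. apply Rinv_le_contravar; nra. Qed.
Lemma r2 z : 1 <= z -> /(4*z^2-1) <= 1 - /(2*(2*z+1)).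
Proof. intro. assert (/(4*z^2-1) <= /3) by (apply Rinv_le_contravar; nra).
  assert (/(2*(2*z+1)) <= /6) by (apply Rinv_le_contravar; nra). lra. Qed.
Lemma r3 z : 1 <= z -> /(2*(2*(z+1)-1)) + /(4*z^2-1) = /(2*(2*z-1)).
Proof. intro. field. repeat split; nra. Qed.
Lemma r4 y : 0 <= y -> 1 - /(2*(2*y+1)) + /(4*(y+1)^2-1) = 1 - /(2*(2*(y+1)+1)).
Proof. intro. field. repeat split; nra. Qed.

Lemma INR_ge1 j : (1 <= j)%nat -> 1 <= INR j.
Proof. intro. apply (le_INR 1). exact H. Qed.

Lemma t1_le_B n m : t1 n m <= Bf n m.
Proof.
  unfold t1, Bf. destruct (lt_dec m n).
  - apply r1. apply INR_ge1. lia.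
  - destruct (Nat.eq_dec m n).
    + subst. rewrite Nat.sub_diag. simpl. lra.
    + apply r2. apply INR_ge1. lia.
Qed.

Lemma B_step n m : Bf n m + t1 n (S m) <= Bf n (S m).
Proof.
  unfold t1, Bf. destruct (lt_dec (S m) n).
  - destruct (lt_dec m n); [|lia].
    replace (n - m)%nat with (S (n - S m)) by lia. rewrite S_INR.
    rewrite r3; [lra|]. apply INR_ge1. lia.
  - destruct (Nat.eq_dec (S m) n).
    + destruct (lt_dec m n); [|lia]. subst.
      replace (S m - m)%nat with 1%nat by lia. replace (S m - S m)%nat with 0%nat by lia.
      simpl. lra.
    + destruct (lt_dec m n); [lia|].
      replace (S m - n)%nat with (S (m - n)) by lia. rewrite S_INR.
      rewrite r4; [lra|]. apply pos_INR.
Qed.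

Lemma B_le1 n m : Bf n m <= 1.
Proof.
  unfold Bf. destruct (lt_dec m n).
  - assert (1 <= INR (n-m)) by (apply INR_ge1; lia).
    assert (/(2*(2*INR(n-m)-1)) <= /2) by (apply Rinv_le_contravar; nra). lra.
  - pose proof (pos_INR (m-n)).
    assert (0 < /(2*(2*INR(m-n)+1))) by (apply Rinv_0_lt_compat; nra). lra.
Qed.

Lemma sum_t1 n m0 N : sum_f_R0 (fun k => t1 n (k+m0)) N <= 1.
Proof.
  assert (H : forall N, sum_f_R0 (fun k => t1 n (k+m0)) N <= Bf n (N+m0)).
  { induction N0 as [|N0 IH]; simpl.
    - apply t1_le_B.
    - pose proof (B_step n (N0+m0)). lra. }
  eapply Rle_trans; [apply H|apply B_le1].
Qed.

Lemma t1_nonneg n m : 0 <= t1 n m.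
Proof.
  unfold t1. destruct (lt_dec m n).
  - assert (1 <= INR (n-m)) by (apply INR_ge1; lia). apply Rlt_le, Rinv_0_lt_compat; nra.
  - destruct (Nat.eq_dec m n); [lra|].
    assert (1 <= INR (m-n)) by (apply INR_ge1; lia). apply Rlt_le, Rinv_0_lt_compat; nra.
Qed.

Lemma growth (u : nat -> R) (c : R) (N1 : nat) :
  (forall n, (N1 <= n)%nat -> c <= u (S n) - u n) ->
  forall j m, (N1 <= m)%nat -> c * INR j <= u (m + j)%nat - u m.
Proof.
  intros H j. induction j as [|j IH]; intros m Hm.
  - rewrite Nat.add_0_r. simpl. lra.
  - rewrite S_INR. replace (m + S j)%nat with (S (m + j)) by lia.
    pose proof (H (m+j)%nat ltac:(lia)). pose proof (IH m Hm). lra.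
Qed.

Theorem lemma5p4 (sigma : nat -> Cplx) (gamma : R)
  (Hg : 0 < gamma)
  (Hlim : is_liminf (fun n => Re (sigma (S n)) - Re (sigma n)) gamma) :
  forall eps : R, 0 < eps < 1 ->
  exists n0 : nat, (1 <= n0)%nat /\
    forall T : R, 2 * PI / (gamma * sqrt (1 - eps)) < T ->
    forall n : nat, (n0 <= n)%nat ->
    forall s : R,
      infinite_sum (fun k => / (4 * INR (k + n0)%nat ^ 2 - 1)) s ->
    forall N : nat,
      sum_f_R0 (fun k =>
        (if Nat.eq_dec (k + n0)%nat n then 0
         else Cmod (K T (Csub (sigma n) (Cconj (sigma (k + n0)%nat)))))
        + Cmod (K T (Cadd (sigma n) (sigma (k + n0)%nat)))) N
      <= 4 * PI / (T * gamma ^ 2 * (1 - eps)) * (1 + s).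
Proof.
  intros eps Heps.
  pose proof PI_RGT_0 as Hpi.
  set (r := sqrt (1 - eps)).
  assert (Hr0 : 0 < r) by (apply sqrt_lt_R0; lra).
  assert (Hr1 : r < 1).
  { unfold r. apply Rlt_le_trans with (sqrt 1); [apply sqrt_lt_1_alt; split; lra|rewrite sqrt_1; lra]. }
  assert (Hr2 : r^2 = 1 - eps) by (unfold r; simpl; rewrite Rmult_1_r; apply sqrt_sqrt; lra).
  set (c := gamma * r).
  assert (Hc0 : 0 < c) by (unfold c; nra).
  assert (Hcg : c < gamma) by (unfold c; nra).
  set (c' := (gamma + c)/2).
  destruct Hlim as [Hl _].
  destruct (Hl (gamma - c') ltac:(unfold c'; lra)) as [N1 HN1].
  assert (HN1' : forall n, (N1 <= n)%nat -> c' <= Re (sigma (S n)) - Re (sigma n)).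
  { intros n Hn. specialize (HN1 n Hn). simpl in HN1. lra. }
  pose proof (growth _ _ _ HN1') as Hgr.
  destruct (nat_unb ((c' * INR N1 - Re (sigma N1)) / (c' - c))) as [M HM].
  exists (N1 + M + 1)%nat. split; [lia|].
  set (n0 := (N1 + M + 1)%nat).
  assert (Hpos : forall m, (n0 <= m)%nat -> c * INR m <= Re (sigma m)).
  { intros m Hm. pose proof (Hgr (m - N1)%nat N1 (le_n _)) as H1.
    replace (N1 + (m - N1))%nat with m in H1 by lia.
    rewrite minus_INR in H1 by lia.
    assert (INR M <= INR m) by (apply le_INR; lia).
    assert (Hcc : 0 < c' - c) by (unfold c'; lra).
    assert ((c' * INR N1 - Re (sigma N1)) < (c' - c) * INR m).
    { apply (Rmult_lt_compat_l (c'-c)) in HM; [|exact Hcc].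
      unfold Rdiv in HM. rewrite <- Rmult_assoc, (Rmult_comm (c'-c)), Rmult_assoc,
        Rinv_r, Rmult_1_r in HM by lra. nra. }
    nra. }
  assert (Hdiff : forall m j, (n0 <= m)%nat -> c * INR j <= Re (sigma (m + j)%nat) - Re (sigma m)).
  { intros m j Hm. pose proof (Hgr j m ltac:(unfold n0 in Hm; lia)).
    pose proof (pos_INR j). assert (c <= c') by (unfold c'; lra). nra. }
  intros T HT n Hn s Hs N.
  assert (HTc : 2*PI < T*c).
  { unfold c. apply (Rmult_lt_compat_r (gamma * r)) in HT; [|exact Hc0].
    unfold Rdiv in HT. rewrite Rmult_assoc, Rinv_l, Rmult_1_r in HT by (apply Rgt_not_eq; exact Hc0). lra. }
  assert (HT0 : 0 < T) by nra.
  set (C := 4*PI/(T*c^2)).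
  set (t2 := fun k => / (4 * INR (k + n0)%nat ^ 2 - 1)).
  apply Rle_trans with (sum_f_R0 (fun k => t1 n (k+n0) * C + t2 k * C) N).
  - apply sum_Rle. intros k _.
    assert (Hm : (n0 <= k + n0)%nat) by lia.
    set (m := (k + n0)%nat) in *.
    apply Rplus_le_compat.
    + destruct (Nat.eq_dec m n) as [E|E].
      * pose proof (t1_nonneg n m). assert (0 < C) by (unfold C; apply Rdiv_lt_0_compat; nra). nra.
      * rewrite Rmult_comm. unfold t1. destruct (lt_dec m n) as [L|L].
        -- apply KB; try lra. apply INR_ge1; lia.
           simpl. pose proof (Hdiff m (n - m)%nat Hm).
           replace (m + (n - m))%nat with n in H by lia.
           pose proof (pos_INR (n - m)); rewrite Rabs_right; nra.
        -- destruct (Nat.eq_dec m n); [contradiction|].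
           apply KB; try lra. apply INR_ge1; lia.
           simpl. pose proof (Hdiff n (m - n)%nat Hn).
           replace (n + (m - n))%nat with m in H by lia.
           pose proof (pos_INR (m - n)); rewrite Rabs_left1; nra.
    + rewrite Rmult_comm. unfold t2. fold m.
      apply KB; try lra. apply INR_ge1; unfold n0 in Hm; lia.
      simpl. pose proof (Hpos m Hm). pose proof (Hpos n Hn).
      pose proof (pos_INR n). pose proof (pos_INR m).
      rewrite Rabs_right; nra.
  - rewrite sum_plus, <- !scal_sum.
    assert (HS1 := sum_t1 n n0 N).
    assert (HS2 : sum_f_R0 t2 N <= s).
    { apply (growing_ineq (sum_f_R0 t2)); [|exact Hs].
      intro k. simpl. unfold t2.
      assert (1 <= INR (S k + n0)) by (apply INR_ge1; unfold n0; lia).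
      assert (0 < /(4 * INR (S k + n0) ^ 2 - 1)) by (apply Rinv_0_lt_compat; nra). lra. }
    assert (HC : C = 4 * PI / (T * gamma ^ 2 * (1 - eps))).
    { unfold C, c. rewrite <- Hr2. field. split; lra. }
    rewrite <- HC.
    assert (0 < C) by (unfold C; apply Rdiv_lt_0_compat; nra).
    nra.
Qed.
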